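(* Let $P$ be a finite lattice. The following are equivalent: (i) $P$ is linearly ordered; (ii) the lattice $(\mathcal{L}_P,\le)$ is distributive; (iii) the lattice $(\mathcal{L}_P,\le)$ is modular.
   Context: For a finite lattice $P$, $\mathcal{L}_P$ denotes the set of maps $f:P\to P$ satisfying (A.1) $a\le f(a)$ for all $a$; (A.2) $a\le b$ implies $f(a)\le f(b)$; (A.3) $f(f(a))=f(a)$, ordered pointwise ($f\le g$ iff $f(a)\le g(a)$ for all $a$); this order makes $\mathcal{L}_P$ a lattice. *)

(* Defs.v *)
From HB Require Import structures.
From mathcomp Require Import all_boot all_order.
Set Implicit Arguments. Unset Strict Implicit. Unset Printing Implicit Defensive.
Import Order.TTheory.
Local Open Scope order_scope.

Section ClosureOps.
Context {disp : Order.disp_t} {P : finLatticeType disp}.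

(* f is in L_P: extensive (A.1), monotone (A.2), idempotent (A.3) *)
Definition closure_op (f : {ffun P -> P}) : Prop :=
  [/\ (forall a, a <= f a),
      (forall a b, a <= b -> f a <= f b) &
      (forall a, f (f a) = f a)].

Definition le_fun (f g : {ffun P -> P}) : Prop := forall a, f a <= g a.

Definition is_meetL (f g m : {ffun P -> P}) : Prop :=
  [/\ closure_op m, le_fun m f, le_fun m g &
      forall h, closure_op h -> le_fun h f -> le_fun h g -> le_fun h m].

Definition is_joinL (f g j : {ffun P -> P}) : Prop :=
  [/\ closure_op j, le_fun f j, le_fun g j &
      forall h, closure_op h -> le_fun f h -> le_fun g h -> le_fun j h].

Definition LP_distributive : Prop :=
  forall a b c bc l ab ac r : {ffun P -> P},
    closure_op a -> closure_op b -> closure_op c ->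
    is_joinL b c bc -> is_meetL a bc l ->
    is_meetL a b ab -> is_meetL a c ac -> is_joinL ab ac r ->
    l = r.

Definition LP_modular : Prop :=
  forall a b c bc l ab r : {ffun P -> P},
    closure_op a -> closure_op b -> closure_op c -> le_fun a c ->
    is_meetL b c bc -> is_joinL a bc l ->
    is_joinL a b ab -> is_meetL ab c r ->
    l = r.

Definition linearly_ordered : Prop := forall x y : P, x <= y \/ y <= x.

End ClosureOps.

(* Main.v *)
Require Import Defs.
From HB Require Import structures.
From mathcomp Require Import all_boot all_order.
Set Implicit Arguments. Unset Strict Implicit. Unset Printing Implicit Defensive.
Import Order.TTheory.
Local Open Scope order_scope.

Section Aux.
Context {disp : Order.disp_t} {P : finLatticeType disp}.
Implicit Types (f g h : {ffun P -> P}) (z w : P).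

Definition topf (w : P) : P := foldr (fun a b => a `|` b) w (enum P).

Lemma topf_ge w z : z <= topf w.
Proof.
rewrite /topf; have : z \in enum P by rewrite mem_enum.
elim: (enum P) => //= a s IH; rewrite in_cons => /orP [/eqP->|/IH H].
  exact: leUl.
exact: le_trans H (leUr _ _).
Qed.

Lemma topf_eq w w' : topf w = topf w'.
Proof. by apply/le_anti; rewrite !topf_ge. Qed.

Definition hw (w : P) : {ffun P -> P} :=
  [ffun y => if y <= w then w else topf w].

Lemma hw_closure w : closure_op (hw w).
Proof.
split=> [a|a b ab|a]; rewrite !ffunE.
- by case: ifP => // _; rewrite topf_ge.
- case: (boolP (b <= w)) => bw; first by rewrite (le_trans ab bw).
  by case: ifP => _; rewrite topf_ge.
- case: (boolP (a <= w)) => aw; first by rewrite lexx.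
  case: ifP => // tw; apply/le_anti; by rewrite tw topf_ge.
Qed.

Lemma hw_above f w : closure_op f -> f w = w -> le_fun f (hw w).
Proof.
move=> [_ mf _] fw y; rewrite ffunE; case: ifP => yw; last exact: topf_ge.
by rewrite -fw; apply: mf.
Qed.

Lemma fix_le f g z : closure_op f -> le_fun f g -> g z = z -> f z = z.
Proof.
move=> [ef _ _] fg gz; apply/le_anti; rewrite ef andbT.
by rewrite -{2}gz fg.
Qed.

Lemma closure_eq f g : closure_op f -> closure_op g ->
  (forall z, f z = z <-> g z = z) -> f = g.
Proof.
move=> [ef mf idf] [eg mg idg] E; apply/ffunP => z; apply/le_anti.
apply/andP; split.
  have : f (g z) = g z by apply/E.
  by move=> H; rewrite -H mf.
have : g (f z) = f z by apply/E.
by move=> H; rewrite -H mg.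
Qed.

Definition pmeet f g : {ffun P -> P} := [ffun z => f z `&` g z].

Lemma pmeet_closure f g : closure_op f -> closure_op g -> closure_op (pmeet f g).
Proof.
move=> [ef mf idf] [eg mg idg]; split=> [a|a b ab|a]; rewrite !ffunE.
- by rewrite lexI ef eg.
- by apply: leI2; [apply: mf|apply: mg].
- have h1 : f (f a `&` g a) <= f a.
    by rewrite -[X in _ <= X]idf; apply: mf; exact: leIl.
  have h2 : g (f a `&` g a) <= g a.
    by rewrite -[X in _ <= X]idg; apply: mg; exact: leIr.
  apply/le_anti; rewrite leI2 //=.
  by rewrite lexI ef eg.
Qed.

Lemma pmeet_meet f g : closure_op f -> closure_op g -> is_meetL f g (pmeet f g).
Proof.
move=> cf cg; split.
- exact: pmeet_closure.
- by move=> a; rewrite ffunE leIl.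
- by move=> a; rewrite ffunE leIr.
- by move=> h _ hf hg a; rewrite ffunE lexI hf hg.
Qed.

Lemma meet_pw f g m : closure_op f -> closure_op g -> is_meetL f g m ->
  forall z, m z = f z `&` g z.
Proof.
move=> cf cg [cm mf mg mmin] z; apply/le_anti; rewrite lexI mf mg /=.
by have := mmin _ (pmeet_closure cf cg) (fun a => _) (fun a => _) z;
  rewrite ffunE; apply => a; rewrite ffunE ?leIl ?leIr.
Qed.

Lemma join_fix f g j z : closure_op f -> closure_op g -> is_joinL f g j ->
  (j z = z <-> f z = z /\ g z = z).
Proof.
move=> cf cg [cj fj gj jmin]; split.
  by move=> jz; split; apply: fix_le jz.
move=> [fz gz]; apply/le_anti; case: cj => [ej _ _]; rewrite ej andbT.
have := jmin _ (hw_closure z) (hw_above cf fz) (hw_above cg gz) z.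
by rewrite ffunE lexx.
Qed.

Lemma lin_meet f g z : linearly_ordered (P := P) ->
  closure_op f -> closure_op g ->
  (f z `&` g z = z <-> f z = z \/ g z = z).
Proof.
move=> lin [ef _ _] [eg _ _]; split.
  case: (lin (f z) (g z)) => H.
    by rewrite (meet_l H); left.
  by rewrite (meet_r H); right.
by case=> ->; [rewrite meet_l | rewrite meet_r].
Qed.

Lemma lin_distr : linearly_ordered (P := P) -> LP_distributive (P := P).
Proof.
move=> lin a b c bc l ab ac r ca cb cc jbc ml mab mac jr.
have cbc : closure_op bc by case: jbc.
have cab : closure_op ab by case: mab.
have cac : closure_op ac by case: mac.
have cl : closure_op l by case: ml.
have cr : closure_op r by case: jr.
apply: closure_eq => // z.
rewrite (meet_pw ca cbc ml).
have := lin_meet z lin ca cbc.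
have := lin_meet z lin ca cb.
have := lin_meet z lin ca cc.
have := join_fix z cab cac jr.
have := join_fix z cb cc jbc.
rewrite (meet_pw ca cb mab) (meet_pw ca cc mac).
tauto.
Qed.

Lemma meet_sym f g m : is_meetL f g m -> is_meetL g f m.
Proof. by case=> ? ? ? H; split=> // h ch ? ?; apply: H. Qed.

Lemma distr_mod : LP_distributive (P := P) -> LP_modular (P := P).
Proof.
move=> D a b c bc l ab r ca cb cc ac mbc jl jab mr.
symmetry; apply: (D c a b ab r a bc l) => //.
all: try exact: meet_sym.
by split=> // [z|h _ _ //]; rewrite lexx.
Qed.

Lemma mod_lin : LP_modular (P := P) -> linearly_ordered (P := P).
Proof.
move=> M x y.
case: (boolP (x <= y)) => [xy|nxy]; first by left.
case: (boolP (y <= x)) => [yx|nyx]; first by right.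
exfalso.
pose m := x `&` y.
pose T := topf x.
pose C := hw x.
pose B := hw y.
have cC : closure_op C by exact: hw_closure.
have cB : closure_op B by exact: hw_closure.
have Cd z : C z = if z <= x then x else T by rewrite ffunE.
have Bd z : B z = if z <= y then y else T by rewrite ffunE /T (topf_eq y x).
clearbody C B.
pose A : {ffun P -> P} := [ffun z => if z <= m then m else C z].
pose Tc : {ffun P -> P} := [ffun => T].
have mx : m <= x by exact: leIl.
have my : m <= y by exact: leIr.
have Cge z : m <= C z.
  rewrite Cd; case: ifP => _ //; exact: topf_ge.
have xnm : ~~ (x <= m) by apply: contra nxy => H; exact: le_trans H my.
have ynm : ~~ (y <= m) by apply: contra nyx => H; exact: le_trans H mx.
have Tnm : ~~ (T <= m) by apply: contra xnm => H; exact: le_trans (topf_ge _ _) H.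
have cA : closure_op A.
  case: cC => [eC mC iC]; split=> [a|a b ab|a]; rewrite !ffunE.
  - by case: ifP => // _; apply: eC.
  - case: (boolP (b <= m)) => bm; first by rewrite (le_trans ab bm).
    by case: ifP => _; [apply: Cge | apply: mC].
  - case: (boolP (a <= m)) => am; first by rewrite lexx.
    have Cnm : ~~ (C a <= m) by rewrite Cd; case: ifP.
    by rewrite (negbTE Cnm) iC.
have cT : closure_op Tc.
  by split=> [a|a b _|a]; rewrite !ffunE ?lexx ?topf_ge.
have AC : le_fun A C.
  by move=> z; rewrite ffunE; case: ifP => _; [apply: Cge|].
have meetBC := pmeet_meet cB cC.
have E := M A B C (pmeet B C) A Tc C cA cB cC AC meetBC.
have : A = C.
  apply: E.
  - split=> // z.
    rewrite !ffunE; case: ifP => zm.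
      have zx : z <= x by exact: le_trans zm mx.
      have zy : z <= y by exact: le_trans zm my.
      by rewrite Bd Cd zx zy meetC.
    exact: leIr.
  - split=> // [z|z|h ch Ah Bh z]; rewrite ?ffunE ?topf_ge //.
    have ch' := ch; case: ch' => [eh mh ih].
    have hA : A (h z) = h z by apply: fix_le (ih z).
    have hB : B (h z) = h z by apply: fix_le (ih z).
    move: hA hB; set w := h z => hA.
    rewrite Bd; case: ifP => wy.
      move=> yw; exfalso; move: hA; rewrite -yw ffunE.
      rewrite (negbTE ynm) Cd (negbTE nyx) => Ty.
      by move: nxy; rewrite -Ty topf_ge.
    by move=> <-; rewrite lexx.
  - split=> //; try (move=> z; rewrite ?ffunE ?topf_ge ?lexx //).
move/ffunP/(_ m); rewrite ffunE lexx Cd mx => mxe.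
by move: xnm; rewrite -mxe lexx.
Qed.

End Aux.

Theorem mainTheorem8 (disp : Order.disp_t) (P : finLatticeType disp) :
  (linearly_ordered (P := P) <-> LP_distributive (P := P)) /\
  (LP_distributive (P := P) <-> LP_modular (P := P)).
Proof.
split; split.
- exact: lin_distr.
- by move=> D; apply: mod_lin; apply: distr_mod.
- exact: distr_mod.
- by move=> M; apply: lin_distr; apply: mod_lin.
Qed.
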